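(* For all probability measures $\nu$ on $\mathcal{G}$: (a) $\Gamma^{\nu}$ is a standard extensive game with perfect recall; and (b) if $\nu$ gives positive probability to all games in $\mathcal{G}$, then $\vec{\sigma}$ is a Nash equilibrium of $\Gamma^\nu$ iff $\vec{\sigma}'$ is a generalized Nash equilibrium of $\Gamma^*$, where $\sigma_{i,\Gamma'}(\langle\Gamma^h\rangle\cdot h')=\sigma'_{i,\Gamma'}(\Gamma^h,h')$.
   Context: Let $\Gamma^* = (\mathcal{G}, \Gamma^m, \mathcal{F})$ be a game with awareness based on a finite standard extensive game $\Gamma$ with perfect recall: $\mathcal{G}$ is a countable set of augmented games based on $\Gamma$ (each augmented game is a finite extensive game with perfect recall, with histories $\mathcal{H}'$, player function $P'$, nature's probabilities $f'_c$, information partitions, utilities $u'_i$, and awareness functions), $\Gamma^m \in \mathcal{G}$ is the modeler's game, and $\mathcal{F}$ maps each pair $(\Gamma^+,h)$ with $\Gamma^+\in\mathcal{G}$ and $P^+(h)=i$ to a pair $(\Gamma^h,I)$ with $\Gamma^h\in\mathcal{G}$ and $I$ an $i$-information set of $\Gamma^h$ (the game $i$ believes is being played at $h$, and the histories he considers possible); $\mathcal{F}$ satisfies consistency conditions including a perfect-recall condition: for all $h'\in I$, there is a prefix $h'_1$ of $h'$ with $P^h(h'_1)=i$ and $\mathcal{F}(\Gamma^h,h'_1)=(\Gamma'',I'')$ iff there is a prefix $h_1$ of $h$ with $P^+(h_1)=i$ and $\mathcal{F}(\Gamma^+,h_1)=(\Gamma'',I'')$, and $h'_1\cdot\langle m\rangle$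 is a prefix of $h'$ iff $h_1\cdot\langle m\rangle$ is a prefix of $h$. Let $\mathcal{G}_i$ be the set of games $\Gamma'\in\mathcal{G}$ such that $\mathcal{F}(\Gamma^+,h)=(\Gamma',\cdot)$ for some $\Gamma^+\in\mathcal{G}$ and $h$ with $P^+(h)=i$. Write $(\Gamma_1,h_1)\sim_i(\Gamma_2,h_2)$ if $\mathcal{F}(\Gamma_1,h_1)=\mathcal{F}(\Gamma_2,h_2)$. A local strategy $\sigma_{i,\Gamma'}$ maps each pair $(\Gamma^+,h)$ with $P^+(h)=i$ and $\mathcal{F}(\Gamma^+,h)=(\Gamma',I)$ to a probability distribution over the moves available at histories in $I$, constant on $\sim_i$-classes. A generalized strategy profile is $\vec{\sigma}'=\{\sigma'_{i,\Gamma'}: i\in N, \Gamma'\in\mathcal{G}_i\}$; it is a generalized Nash equilibrium if for every $i$, $\Gamma'\in\mathcal{G}_i$ and local strategy $\sigma$ for $i$ in $\Gamma'$, $EU_{i,\Gamma'}(\vec{\sigma}')\ge EU_{i,\Gamma'}((\vec{\sigma}'_{-(i,\Gamma')},\sigma))$, where $EU_{i,\Gamma'}$ is $i$'s expected payoff in $\Gamma'$. For $\Gamma'\in\mathcal{G}$ let $\lfloor \mathcal{H}'\rfloor$ be the set of $h\in\mathcal{H}'$ such that for every prefix $h_1\cdot\langle m\rangle$ of $h$, if $P'(h_1)=i\in N$ and $\mathcal{F}(\Gamma',h_1)=(\Gamma'',I)$ then $h_2\cdot\langle m\rangle\in\mathcal{H}''$ for all $h_2\in I$. Given a probability measure $\nu$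 on $\mathcal{G}$, $\Gamma^\nu$ is the standard game with: players $N^\nu=\{(i,\Gamma'):\Gamma'\in\mathcal{G}_i\}$; moves $\mathcal{G}$ together with all moves occurring in the $\lfloor\mathcal{H}'\rfloor$; histories $\langle\,\rangle$ and $\langle\Gamma'\rangle\cdot h$ for $\Gamma'\in\mathcal{G}$, $h\in\lfloor\mathcal{H}'\rfloor$; $P^\nu(\langle\,\rangle)=c$, $P^\nu(\langle\Gamma^h\rangle\cdot h')=(i,\Gamma^{h'})$ if $P^h(h')=i\in N$ and $\mathcal{F}(\Gamma^h,h')=(\Gamma^{h'},\cdot)$, and $=c$ if $P^h(h')=c$; $f^\nu_c(\Gamma'\mid\langle\,\rangle)=\nu(\Gamma')$ and $f^\nu_c(\cdot\mid\langle\Gamma^h\rangle\cdot h')=f^h_c(\cdot\mid h')$ when $P^h(h')=c$; the information sets of player $(i,\Gamma')$ are the $\sim_i$-classes restricted to histories where $i$ moves and $\mathcal{F}$ has the form $(\Gamma',\cdot)$; and $u^\nu_{i,\Gamma'}(\langle\Gamma^h\rangle\cdot z)=u^h_i(z)$ if $\Gamma^h=\Gamma'$ and $0$ otherwise. *)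

(* Defs.v *)
From Stdlib Require Import Reals List ClassicalEpsilon.
Import ListNotations.
Open Scope R_scope.

Set Implicit Arguments.

Definition prefix {A : Type} (a b : list A) : Prop := exists c, b = a ++ c.

(* Unconditional (net of finite subsets) summation of a real family over the
   elements of a set [S] (for reals, equivalent to absolute summability);
   [s] is the sum. Finite subsets are duplicate-free lists of elements of S. *)
Definition has_sum_on {X : Type} (S : X -> Prop) (f : X -> R) (s : R) : Prop :=
  forall eps, 0 < eps ->
    exists L0 : list X, Forall S L0 /\
      forall L : list X, NoDup L -> Forall S L -> incl L0 L ->
        Rabs (fold_right Rplus 0 (map f L) - s) < eps.

Definition is_distr {X : Type} (S : X -> Prop) (d : X -> R) : Prop :=
  (forall x, 0 <= d x) /\ (forall x, ~ S x -> d x = 0) /\ has_sum_on S d 1.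

Record egame (Pl Mv : Type) := mkGame {
  pl   : Pl -> Prop;
  hist : list Mv -> Prop;
  pf   : list Mv -> option Pl;                (* player function; None = chance c *)
  fc   : list Mv -> Mv -> R;
  info : Pl -> list Mv -> list Mv -> Prop;    (* "same p-information set" *)
  util : Pl -> list Mv -> R                   (* u_p on terminal histories *)
}.

Section Generic.
Context {Pl Mv : Type} (G : egame Pl Mv).

Definition moves (h : list Mv) (m : Mv) : Prop := hist G (h ++ [m]).
Definition nonterm (h : list Mv) : Prop := hist G h /\ exists m, moves h m.
Definition terminal (z : list Mv) : Prop := hist G z /\ ~ exists m, moves z m.
Definition pmove (h : list Mv) (p : Pl) : Prop := nonterm h /\ pf G h = Some p.

Definition std_game : Prop :=
  hist G [] /\
  (forall h m, hist G (h ++ [m]) -> hist G h) /\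
  (* all histories finite: no infinite chain of histories *)
  (forall h, hist G h -> Acc (fun h2 h1 => hist G h2 /\ exists m, h2 = h1 ++ [m]) h) /\
  (forall h p, pmove h p -> pl G p) /\
  (forall h, nonterm h -> pf G h = None -> is_distr (moves h) (fc G h)) /\
  (forall p h h', info G p h h' -> pmove h p /\ pmove h' p) /\
  (forall p h, pmove h p -> info G p h h) /\
  (forall p h h', info G p h h' -> info G p h' h) /\
  (forall p h h' h'', info G p h h' -> info G p h' h'' -> info G p h h'') /\
  (forall p h h', info G p h h' -> forall m, moves h m <-> moves h' m).

Definition perfect_recall : Prop :=
  forall p h h', info G p h h' ->
    forall h1 m, prefix (h1 ++ [m]) h -> pf G h1 = Some p ->
      exists h1', prefix (h1' ++ [m]) h' /\ pf G h1' = Some p /\ info G p h1 h1'.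

Definition finite_game : Prop := exists L, forall h, hist G h -> In h L.

Definition info_set_of (p : Pl) (I : list Mv -> Prop) : Prop :=
  exists h0, pmove h0 p /\ forall h, I h <-> info G p h0 h.

Fixpoint pp_aux (step : list Mv -> Mv -> R) (acc r : list Mv) : R :=
  match r with
  | [] => 1
  | m :: r' => step acc m * pp_aux step (acc ++ [m]) r'
  end.
Definition path_prob (step : list Mv -> Mv -> R) (z : list Mv) : R := pp_aux step [] z.

Definition exp_payoff (step : list Mv -> Mv -> R) (p : Pl) (v : R) : Prop :=
  has_sum_on terminal (fun z => path_prob step z * util G p z) v.

Definition behavioral (p : Pl) (b : list Mv -> Mv -> R) : Prop :=
  forall h, pmove h p ->
    is_distr (moves h) (b h) /\ forall h', info G p h h' -> forall m, b h m = b h' m.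

Definition profile_step (s : Pl -> list Mv -> Mv -> R) (h : list Mv) (m : Mv) : R :=
  match pf G h with None => fc G h m | Some p => s p h m end.

Definition nash (s : Pl -> list Mv -> Mv -> R) : Prop :=
  (forall p, pl G p -> behavioral p (s p)) /\
  forall p, pl G p -> forall t : Pl -> list Mv -> Mv -> R,
    (forall q, q <> p -> t q = s q) -> behavioral p (t p) ->
    exists v v', exp_payoff (profile_step s) p v /\ exp_payoff (profile_step t) p v' /\ v' <= v.

End Generic.

(* N : players of Gamma, Mv : moves, T : the (countable) set G of augmented games,
   game g : the augmented game g,
   F g h = (Gamma^h, I) *)

Section Awareness.
Context {N Mv T : Type} (game : T -> egame N Mv)
        (F : T -> list Mv -> T * (list Mv -> Prop)).

Definition awareness_game : Prop :=
  (forall g, std_game (game g) /\ perfect_recall (game g) /\ finite_game (game g)) /\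
  (forall g h i, pmove (game g) h i -> info_set_of (game (fst (F g h))) i (snd (F g h))) /\
  (* moves i considers possible are available *)
  (forall g h i, pmove (game g) h i -> forall h' m, snd (F g h) h' ->
     hist (game (fst (F g h))) (h' ++ [m]) -> hist (game g) (h ++ [m])) /\
  (forall g h i, pmove (game g) h i -> forall h', snd (F g h) h' ->
     (forall X, (exists h1', prefix h1' h' /\ pf (game (fst (F g h))) h1' = Some i /\
                             F (fst (F g h)) h1' = X)
                <-> (exists h1, prefix h1 h /\ pf (game g) h1 = Some i /\ F g h1 = X)) /\
     (forall h1' h1 m, prefix h1' h' -> pf (game (fst (F g h))) h1' = Some i ->
        prefix h1 h -> pf (game g) h1 = Some i -> F (fst (F g h)) h1' = F g h1 ->
        (prefix (h1' ++ [m]) h' <-> prefix (h1 ++ [m]) h))).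

Definition Gset (i : N) (g' : T) : Prop :=
  exists g h, pmove (game g) h i /\ fst (F g h) = g'.

Definition local_strategy (i : N) (g' : T) (s : T -> list Mv -> Mv -> R) : Prop :=
  forall g h, pmove (game g) h i -> fst (F g h) = g' ->
    is_distr (fun m => exists h2, snd (F g h) h2 /\ hist (game g') (h2 ++ [m])) (s g h) /\
    forall g2 h2, pmove (game g2) h2 i -> F g2 h2 = F g h -> forall m, s g h m = s g2 h2 m.

Definition gen_profile (s : N -> T -> T -> list Mv -> Mv -> R) : Prop :=
  forall i g', Gset i g' -> local_strategy i g' (s i g').

Definition aug_step (s : N -> T -> T -> list Mv -> Mv -> R) (g' : T)
  (h : list Mv) (m : Mv) : R :=
  match pf (game g') h with
  | None => fc (game g') h m
  | Some j => s j (fst (F g' h)) g' h m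
  end.

Definition gen_nash (s : N -> T -> T -> list Mv -> Mv -> R) : Prop :=
  forall i g', Gset i g' ->
    forall t : N -> T -> T -> list Mv -> Mv -> R,
      (forall j g'', (j, g'') <> (i, g') -> t j g'' = s j g'') ->
      local_strategy i g' (t i g') ->
      exists v v', exp_payoff (game g') (aug_step s g') i v /\
                   exp_payoff (game g') (aug_step t g') i v' /\ v' <= v.

Definition flr (g : T) (h : list Mv) : Prop :=
  hist (game g) h /\
  forall h1 m i, prefix (h1 ++ [m]) h -> pf (game g) h1 = Some i ->
    forall h2, snd (F g h1) h2 -> hist (game (fst (F g h1))) (h2 ++ [m]).

Definition unr (r : list (T + Mv)) : list Mv :=
  flat_map (fun a => match a with inr m => [m] | inl _ => [] end) r.

Definition nuHist (x : list (T + Mv)) : Prop :=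
  x = [] \/ exists g h, x = inl g :: map inr h /\ flr g h.

Definition nuP (x : list (T + Mv)) : option (N * T) :=
  match x with
  | inl g :: r =>
      match pf (game g) (unr r) with
      | Some i => Some (i, fst (F g (unr r)))
      | None => None
      end
  | _ => None
  end.

Definition nuFc (nu : T -> R) (x : list (T + Mv)) (a : T + Mv) : R :=
  match x with
  | [] => match a with inl g => nu g | inr _ => 0 end
  | inl g :: r => match a with inr m => fc (game g) (unr r) m | inl _ => 0 end
  | _ => 0
  end.

Definition nuNonterm (x : list (T + Mv)) : Prop :=
  nuHist x /\ exists a, nuHist (x ++ [a]).

Definition nuInfo (p : N * T) (x y : list (T + Mv)) : Prop :=
  nuNonterm x /\ nuNonterm y /\ nuP x = Some p /\ nuP y = Some p /\
  exists g1 h1 g2 h2, x = inl g1 :: map inr h1 /\ y = inl g2 :: map inr h2 /\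
                      F g1 h1 = F g2 h2.

Definition nuU (p : N * T) (x : list (T + Mv)) : R :=
  match x with
  | inl g :: r =>
      if excluded_middle_informative (g = snd p) then util (game g) (fst p) (unr r) else 0
  | _ => 0
  end.

Definition Gamma_nu (nu : T -> R) : egame (N * T) (T + Mv) :=
  mkGame (fun p => Gset (fst p) (snd p)) nuHist nuP (nuFc nu) nuInfo nuU.

Definition induced (nu : T -> R) (s : N * T -> list (T + Mv) -> (T + Mv) -> R)
  (s' : N -> T -> T -> list Mv -> Mv -> R) : Prop :=
  forall i g' g h, pmove (Gamma_nu nu) (inl g :: map inr h) (i, g') ->
    forall a, s (i, g') (inl g :: map inr h) a =
              match a with inr m => s' i g' g h m | inl _ => 0 end.

End Awareness.

Definition prob_measure {T : Type} (nu : T -> R) : Prop :=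
  (forall g, 0 <= nu g) /\ has_sum_on (fun _ => True) nu 1.

(* Main.v *)
Require Import Defs.
From Stdlib Require Import Reals List Lra Classical ClassicalEpsilon Permutation FunctionalExtensionality.
Import ListNotations.
Open Scope R_scope.

Definition cdec {X : Type} (x y : X) : {x = y} + {x <> y} := excluded_middle_informative (x = y).
Definition sumL {X : Type} (f : X -> R) (L : list X) : R := fold_right Rplus 0 (map f L).

Lemma sumL_perm {X} (f : X -> R) L1 L2 : Permutation L1 L2 -> sumL f L1 = sumL f L2.
Proof. induction 1; unfold sumL in *; simpl; lra. Qed.

Lemma sumL_app {X} (f : X -> R) L1 L2 : sumL f (L1 ++ L2) = sumL f L1 + sumL f L2.
Proof. induction L1; unfold sumL in *; simpl; [lra| rewrite IHL1; lra]. Qed.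

Lemma sumL_zero {X} (f : X -> R) L : (forall x, In x L -> f x = 0) -> sumL f L = 0.
Proof. induction L; intros H; unfold sumL in *; simpl; [lra|].
  rewrite H by (left; auto). rewrite IHL by (intros; apply H; right; auto). lra. Qed.

Lemma sumL_scal {X} (c : R) (f : X -> R) L : sumL (fun x => c * f x) L = c * sumL f L.
Proof. induction L; unfold sumL in *; simpl; [lra| rewrite IHL; lra]. Qed.

Lemma sumL_ext {X} (f g : X -> R) L : (forall x, In x L -> f x = g x) -> sumL f L = sumL g L.
Proof. induction L; intros H; unfold sumL in *; simpl; [lra|].
  rewrite H by (left; auto). rewrite IHL by (intros; apply H; right; auto). lra. Qed.

Lemma sumL_map {X Y} (f : Y -> R) (phi : X -> Y) L : sumL f (map phi L) = sumL (fun x => f (phi x)) L.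
Proof. unfold sumL; rewrite map_map; reflexivity. Qed.

Lemma sumL_filter {X} (f : X -> R) (p : X -> bool) L :
  sumL f L = sumL f (filter p L) + sumL f (filter (fun x => negb (p x)) L).
Proof. induction L; unfold sumL in *; simpl; [lra|].
  destruct (p a); simpl; rewrite IHL; lra. Qed.

Definition inb {X} (L : list X) (x : X) : bool := if in_dec cdec x L then true else false.

Lemma has_sum_finite {X} (S : X -> Prop) (f : X -> R) (L0 : list X) :
  NoDup L0 -> Forall S L0 -> (forall x, S x -> ~ In x L0 -> f x = 0) ->
  has_sum_on S f (sumL f L0).
Proof.
  intros HN HF HZ eps Heps. exists L0. split; [exact HF|].
  intros L HNL HFL HI.
  change (Rabs (sumL f L - sumL f L0) < eps).
  rewrite (sumL_filter f (inb L0) L).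
  assert (E1 : sumL f (filter (inb L0) L) = sumL f L0).
  { apply sumL_perm. apply NoDup_Permutation.
    - apply NoDup_filter; auto.
    - auto.
    - intros x. rewrite filter_In. unfold inb. destruct (in_dec cdec x L0); split; intros; try tauto.
      + split; auto. 
      + destruct H; discriminate. }
  assert (E2 : sumL f (filter (fun x => negb (inb L0 x)) L) = 0).
  { apply sumL_zero. intros x Hx. rewrite filter_In in Hx. destruct Hx as [Hx Hn].
    unfold inb in Hn. destruct (in_dec cdec x L0); simpl in Hn; [discriminate|].
    apply HZ; auto. rewrite Forall_forall in HFL; auto. }
  rewrite E1, E2. replace (sumL f L0 + 0 - sumL f L0) with 0 by lra.
  rewrite Rabs_R0; auto.
Qed.

Lemma has_sum_unique {X} (S : X -> Prop) (f : X -> R) s1 s2 :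
  has_sum_on S f s1 -> has_sum_on S f s2 -> s1 = s2.
Proof.
  intros H1 H2. destruct (Req_dec s1 s2) as [|Hne]; auto. exfalso.
  set (e := Rabs (s1 - s2) / 2).
  assert (He : 0 < e) by (unfold e; assert (0 < Rabs (s1 - s2)) by (apply Rabs_pos_lt; lra); lra).
  destruct (H1 e He) as [L1 [HF1 HL1]]. destruct (H2 e He) as [L2 [HF2 HL2]].
  set (L := nodup cdec (L1 ++ L2)).
  assert (HN : NoDup L) by apply NoDup_nodup.
  assert (HF : Forall S L).
  { apply Forall_forall. intros x Hx. unfold L in Hx. rewrite nodup_In in Hx.
    apply in_app_or in Hx. rewrite Forall_forall in HF1, HF2. destruct Hx; auto. }
  assert (I1 : incl L1 L) by (intros x Hx; unfold L; rewrite nodup_In; apply in_or_app; auto).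
  assert (I2 : incl L2 L) by (intros x Hx; unfold L; rewrite nodup_In; apply in_or_app; auto).
  specialize (HL1 L HN HF I1). specialize (HL2 L HN HF I2).
  set (a := fold_right Rplus 0 (map f L)) in *.
  assert (Rabs (s1 - s2) <= Rabs (a - s1) + Rabs (a - s2)).
  { replace (s1 - s2) with ((a - s2) - (a - s1)) by ring.
    eapply Rle_trans; [apply Rabs_triang|]. rewrite Rabs_Ropp. lra. }
  unfold e in *. lra.
Qed.

Lemma has_sum_ext {X} (S1 S2 : X -> Prop) (f1 f2 : X -> R) s :
  (forall x, S1 x <-> S2 x) -> (forall x, S1 x -> f1 x = f2 x) ->
  has_sum_on S1 f1 s -> has_sum_on S2 f2 s.
Proof.
  intros HS Hf H eps He. destruct (H eps He) as [L0 [HF HL]]. exists L0. split.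
  - rewrite Forall_forall in *. intros; apply HS; auto.
  - intros L HN HFL HI. assert (HFL' : Forall S1 L) by (rewrite Forall_forall in *; intros; apply HS; auto).
    specialize (HL L HN HFL' HI).
    replace (fold_right Rplus 0 (map f2 L)) with (fold_right Rplus 0 (map f1 L)); auto.
    change (sumL f1 L = sumL f2 L). apply sumL_ext. intros x Hx. rewrite Forall_forall in HFL'. auto.
Qed.

Lemma list_preimage {X Y} (phi : X -> Y) (P : Y -> Prop) (L : list Y) :
  Forall P L -> (forall y, P y -> exists x, y = phi x) -> exists L', L = map phi L'.
Proof.
  induction L; intros HF H. exists []; auto.
  inversion HF; subst. destruct (H a H2) as [x ->]. destruct (IHL H3 H) as [L' ->].
  exists (x :: L'); auto.
Qed.

Lemma has_sum_pull {X Y} (phi : Y -> X) (S : X -> Prop) (f : X -> R) s :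
  FinFun.Injective phi -> (forall x, S x -> exists y, x = phi y) ->
  has_sum_on S f s -> has_sum_on (fun y => S (phi y)) (fun y => f (phi y)) s.
Proof.
  intros Hinj Him H eps He. destruct (H eps He) as [L0 [HF HL]].
  destruct (list_preimage phi S L0 HF Him) as [L0' ->].
  exists L0'. split. { rewrite Forall_forall in *. intros y Hy. apply HF. apply in_map; auto. }
  intros L HN HFL HI. specialize (HL (map phi L)).
  rewrite map_map in HL. apply HL.
  - apply FinFun.Injective_map_NoDup; auto.
  - rewrite Forall_forall in *. intros x Hx. apply in_map_iff in Hx. destruct Hx as [y [<- Hy]]. auto.
  - intros x Hx. apply in_map_iff in Hx. destruct Hx as [y [<- Hy]]. apply in_map; auto.
Qed.

Lemma has_sum_push {X Y} (phi : Y -> X) (S : Y -> Prop) (f : Y -> R) (S' : X -> Prop) (f' : X -> R) s :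
  FinFun.Injective phi -> (forall x, S' x <-> exists y, x = phi y /\ S y) ->
  (forall y, f' (phi y) = f y) ->
  has_sum_on S f s -> has_sum_on S' f' s.
Proof.
  intros Hinj HS Hf H eps He. destruct (H eps He) as [L0 [HF HL]].
  exists (map phi L0). split.
  { rewrite Forall_forall in *. intros x Hx. apply in_map_iff in Hx. destruct Hx as [y [<- Hy]].
    apply HS. eauto. }
  intros L HN HFL HI.
  destruct (list_preimage phi S' L HFL) as [L' ->].
  { intros y Hy. apply HS in Hy. destruct Hy as [x [-> _]]; eauto. }
  rewrite map_map. rewrite (map_ext _ _ Hf). apply HL.
  - eapply NoDup_map_inv; eauto.
  - rewrite Forall_forall in *. intros y Hy. specialize (HFL (phi y) (in_map _ _ _ Hy)).
    apply HS in HFL. destruct HFL as [y' [E Hy']]. apply Hinj in E. subst; auto.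
  - intros y Hy. specialize (HI (phi y) (in_map _ _ _ Hy)). apply in_map_iff in HI.
    destruct HI as [y' [E Hy']]. apply Hinj in E. subst; auto.
Qed.

Lemma prefix_refl {A} (a : list A) : prefix a a.
Proof. exists []; rewrite app_nil_r; auto. Qed.
Lemma prefix_app {A} (a b : list A) : prefix a (a ++ b).
Proof. exists b; auto. Qed.
Lemma prefix_trans {A} (a b c : list A) : prefix a b -> prefix b c -> prefix a c.
Proof. intros [x ->] [y ->]. exists (x ++ y). rewrite app_assoc; auto. Qed.



Lemma rev_list_rect_helper {A} (e : list A) : e = [] \/ exists e' y, e = e' ++ [y].
Proof. destruct e as [|y e'] using rev_ind; [left; auto| right; eauto]. Qed.

Lemma prefix_snoc_inv {A} (a c : list A) b d :
  prefix (a ++ [b]) (c ++ [d]) -> prefix (a ++ [b]) c \/ (a = c /\ b = d).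
Proof.
  intros [e He]. destruct (rev_list_rect_helper e) as [->|[e' [y ->]]].
  - rewrite app_nil_r in He. apply app_inj_tail in He. right; destruct He; auto.
  - left. rewrite app_assoc in He. apply app_inj_tail in He. destruct He as [He _].
    exists e'. exact He.
Qed.

Lemma prefix_nil_snoc {A} (a : list A) b : ~ prefix (a ++ [b]) [].
Proof. intros [e He]. destruct a; discriminate. Qed.

Lemma std_hist_prefix {Pl Mv} (G : egame Pl Mv) : std_game G ->
  forall h r, hist G (h ++ r) -> hist G h.
Proof.
  intros HG h r. induction r as [|x r IH] using rev_ind; intros H.
  - rewrite app_nil_r in H; auto.
  - apply IH. rewrite app_assoc in H. eapply (proj1 (proj2 HG)); eauto.
Qed.

Lemma std_hist_prefix' {Pl Mv} (G : egame Pl Mv) : std_game G ->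
  forall h h', prefix h h' -> hist G h' -> hist G h.
Proof. intros HG h h' [r ->]. apply std_hist_prefix; auto. Qed.

Lemma unr_map {T Mv} (h : list Mv) : unr (map (@inr T Mv) h) = h.
Proof. induction h; simpl; auto. rewrite IHh; auto. Qed.

Lemma map_inr_inj {T Mv} (h1 h2 : list Mv) : map (@inr T Mv) h1 = map inr h2 -> h1 = h2.
Proof. revert h2; induction h1; destruct h2; simpl; intros H; try discriminate; auto.
  injection H; intros; subst. f_equal; auto. Qed.

Lemma emb_inj {T Mv} (g1 g2 : T) (h1 h2 : list Mv) :
  (inl g1 :: map inr h1 : list (T + Mv)) = inl g2 :: map inr h2 -> g1 = g2 /\ h1 = h2.
Proof. intros H. injection H; intros H1 H2. split; auto. apply (map_inr_inj (T:=T)); auto. Qed.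

Section Aw.
Context {N Mv T : Type} (game : T -> egame N Mv) (F : T -> list Mv -> T * (list Mv -> Prop)).
Context (Haw : awareness_game game F).

Lemma HG g : std_game (game g).
Proof. apply (proj1 Haw g). Qed.

Lemma flr_hist g h : flr game F g h -> hist (game g) h.
Proof. intros [H _]; auto. Qed.

Lemma flr_prefix g h h' : prefix h h' -> flr game F g h' -> flr game F g h.
Proof.
  intros Hp [Hh Hc]. split.
  - eapply std_hist_prefix'; eauto. apply HG.
  - intros h1 m i Hp1 Hpf. eapply Hc; [|exact Hpf]. eapply prefix_trans; eauto.
Qed.

Lemma flr_nil g : flr game F g [].
Proof. split. apply (HG g). intros h1 m i Hp. exfalso; eapply prefix_nil_snoc; eauto. Qed.

Lemma flr_snoc g h m : flr game F g (h ++ [m]) <->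
  flr game F g h /\ hist (game g) (h ++ [m]) /\
  (forall i, pf (game g) h = Some i -> forall h2, snd (F g h) h2 -> hist (game (fst (F g h))) (h2 ++ [m])).
Proof.
  split.
  - intros Hf. split; [eapply flr_prefix; [apply prefix_app|]; eauto|].
    destruct Hf as [Hh Hc]. split; auto. intros i Hi. eapply Hc; [apply prefix_refl| exact Hi].
  - intros [[Hh Hc] [Hh' Hm]]. split; auto. intros h1 m1 i Hp Hi.
    apply prefix_snoc_inv in Hp. destruct Hp as [Hp|[-> ->]].
    + eapply Hc; eauto.
    + eapply Hm; eauto.
Qed.

Lemma F_infoset g h i : pmove (game g) h i ->
  exists h0, pmove (game (fst (F g h))) h0 i /\
    forall h2, snd (F g h) h2 <-> info (game (fst (F g h))) i h0 h2.
Proof. intros Hp. apply (proj1 (proj2 Haw)) in Hp. exact Hp. Qed.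

Lemma F_same_moves g h i h2 h3 m : pmove (game g) h i ->
  snd (F g h) h2 -> snd (F g h) h3 ->
  hist (game (fst (F g h))) (h2 ++ [m]) -> hist (game (fst (F g h))) (h3 ++ [m]).
Proof.
  intros Hp H2 H3 Hm. destruct (F_infoset g h i Hp) as [h0 [Hp0 HI]].
  apply HI in H2. apply HI in H3. pose proof (HG (fst (F g h))) as S.
  destruct S as (_&_&_&_&_&_&_&Ssym&Strans&Smv).
  assert (info (game (fst (F g h))) i h2 h3) by (eapply Strans; [apply Ssym; eauto| eauto]).
  apply (Smv _ _ _ H m). exact Hm.
Qed.

Lemma F_nonempty g h i : pmove (game g) h i ->
  exists h0 m0, snd (F g h) h0 /\ hist (game (fst (F g h))) (h0 ++ [m0]).
Proof.
  intros Hp. destruct (F_infoset g h i Hp) as [h0 [Hp0 HI]].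
  exists h0. pose proof Hp0 as [[_ [m0 Hm0]] _]. exists m0. split; auto.
  apply HI. pose proof (HG (fst (F g h))) as (_&_&_&_&_&_&Srefl&_). auto.
Qed.


Lemma ax3 g h i : pmove (game g) h i -> forall h' m, snd (F g h) h' ->
     hist (game (fst (F g h))) (h' ++ [m]) -> hist (game g) (h ++ [m]).
Proof. apply (proj1 (proj2 (proj2 Haw))). Qed.

Lemma nuHist_emb g h : nuHist game F (inl g :: map inr h) <-> flr game F g h.
Proof.
  split.
  - intros [H|[g0 [h0 [E Hf]]]]; [discriminate|]. apply emb_inj in E. destruct E; subst; auto.
  - intros Hf. right. eauto.
Qed.

Lemma nuHist_snoc x a : nuHist game F (x ++ [a]) ->
  (x = [] /\ exists g, a = inl g) \/
  (exists g h m, x = inl g :: map inr h /\ a = inr m /\ flr game F g (h ++ [m])).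
Proof.
  intros [H|[g [h [E Hf]]]]. { destruct x; discriminate. }
  destruct x as [|y x'].
  - left. split; auto. simpl in E. injection E; intros; subst; eauto.
  - right. simpl in E. injection E; intros E1 E2; subst.
    symmetry in E1. apply map_eq_app in E1. destruct E1 as [l1 [l2 [-> [E1 E2]]]].
    destruct l2 as [|m [|m' l2']]; try discriminate. simpl in E2. injection E2; intros; subst.
    exists g, l1, m. auto.
Qed.

Lemma nuHist_snoc_emb g h a : nuHist game F ((inl g :: map inr h) ++ [a]) <->
  exists m, a = inr m /\ flr game F g (h ++ [m]).
Proof.
  split.
  - intros H. apply nuHist_snoc in H. destruct H as [[E _]|[g0 [h0 [m [E [-> Hf]]]]]]; [discriminate|].
    apply emb_inj in E; destruct E; subst. eauto.
  - intros [m [-> Hf]]. apply nuHist_emb in Hf. simpl. rewrite map_app in Hf. exact Hf.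
Qed.

Lemma flr_ext g h : flr game F g h -> nonterm (game g) h -> exists m, flr game F g (h ++ [m]).
Proof.
  intros Hf Hn. destruct (pf (game g) h) as [j|] eqn:Ep.
  - assert (Hp : pmove (game g) h j) by (split; auto).
    destruct (F_nonempty g h j Hp) as [h0 [m0 [H0 Hm0]]]. exists m0.
    apply flr_snoc. split; auto. split; [eapply ax3; eauto|].
    intros i Hi h2 H2. rewrite Ep in Hi. injection Hi; intros; subst.
    apply (F_same_moves g h i h0 h2 m0); auto.
  - destruct Hn as [_ [m Hm]]. exists m. apply flr_snoc. split; auto. split; auto.
    intros i Hi; rewrite Ep in Hi; discriminate.
Qed.

Lemma flr_not_ext g h m : flr game F g h -> hist (game g) (h ++ [m]) -> ~ flr game F g (h ++ [m]) ->
  exists j, pf (game g) h = Some j /\ pmove (game g) h j /\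
    ~ exists h2, snd (F g h) h2 /\ hist (game (fst (F g h))) (h2 ++ [m]).
Proof.
  intros Hf Hm Hn. destruct (pf (game g) h) as [j|] eqn:Ep.
  - assert (Hp : pmove (game g) h j) by (split; auto; split; [apply Hf| eauto]).
    exists j. split; auto. split; auto. intros [h2 [H2 Hm2]]. apply Hn.
    apply flr_snoc. split; auto. split; auto. intros i Hi h3 H3.
    rewrite Ep in Hi. injection Hi; intros; subst. apply (F_same_moves g h i h2 h3 m); auto.
  - exfalso. apply Hn. apply flr_snoc. split; auto. split; auto.
    intros i Hi; rewrite Ep in Hi; discriminate.
Qed.

Lemma flr_snoc_pm g h j m : flr game F g h -> pmove (game g) h j -> pf (game g) h = Some j ->
  (flr game F g (h ++ [m]) <-> exists h2, snd (F g h) h2 /\ hist (game (fst (F g h))) (h2 ++ [m])).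
Proof.
  intros Hf Hp Ep. split.
  - intros H. apply flr_snoc in H. destruct H as [_ [_ H]].
    destruct (F_nonempty g h j Hp) as [h0 [m0 [H0 _]]]. exists h0. split; auto. eapply H; eauto.
  - intros [h2 [H2 Hm2]]. apply flr_snoc. split; auto. split; [eapply ax3; eauto|].
    intros i Hi h3 H3. apply (F_same_moves g h j h2 h3 m); auto.
Qed.

Lemma moves_emb_pm nu g h j a : flr game F g h -> pmove (game g) h j -> pf (game g) h = Some j ->
  (moves (Gamma_nu game F nu) (inl g :: map inr h) a <->
   exists m, a = inr m /\ exists h2, snd (F g h) h2 /\ hist (game (fst (F g h))) (h2 ++ [m])).
Proof.
  intros Hf Hp Ep. unfold moves. simpl. change (inl g :: map inr h ++ [a]) with ((inl g :: map inr h) ++ [a]).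
  rewrite nuHist_snoc_emb. split.
  - intros [m [-> Hm]]. exists m; split; auto. eapply flr_snoc_pm; eauto.
  - intros [m [-> Hm]]. exists m; split; auto. eapply flr_snoc_pm; eauto.
Qed.


Lemma nuP_emb g h : nuP game F (inl g :: map inr h) =
  match pf (game g) h with Some i => Some (i, fst (F g h)) | None => None end.
Proof. simpl. rewrite unr_map. reflexivity. Qed.

Lemma nu_pmove_form nu x p : pmove (Gamma_nu game F nu) x p ->
  exists g h j, x = inl g :: map inr h /\ flr game F g h /\ pf (game g) h = Some j /\
    pmove (game g) h j /\ p = (j, fst (F g h)).
Proof.
  intros [[Hx [a Ha]] Hp]. simpl in Hx, Ha, Hp. apply nuHist_snoc in Ha.
  destruct Ha as [[-> _]|[g [h [m [-> [-> Hf]]]]]]; [discriminate|].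
  rewrite nuP_emb in Hp. destruct (pf (game g) h) as [j|] eqn:Ep; [|discriminate].
  injection Hp; intros <-. exists g, h, j. split; auto. 
  assert (Hfh : flr game F g h) by (eapply flr_prefix; [apply prefix_app| eauto]).
  split; auto. split; auto. split; auto. split; auto. split; [apply flr_hist; auto|]. exists m. apply flr_hist; auto.
Qed.

Lemma emb_pmove nu g h j m : flr game F g (h ++ [m]) -> pf (game g) h = Some j ->
  pmove (Gamma_nu game F nu) (inl g :: map inr h) (j, fst (F g h)).
Proof.
  intros Hf Ep. split.
  - split; simpl.
    + apply nuHist_emb. eapply flr_prefix; [apply prefix_app| eauto].
    + exists (inr m). change (inl g :: map inr h ++ [inr m]) with ((inl g :: map inr h) ++ [@inr T Mv m]).
      apply nuHist_snoc_emb. eauto.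
  - simpl. rewrite unr_map, Ep. reflexivity.
Qed.

Lemma emb_pmove_game g h j m : flr game F g (h ++ [m]) -> pf (game g) h = Some j ->
  pmove (game g) h j.
Proof.
  intros Hf Ep. split; auto. split.
  - apply flr_hist. eapply flr_prefix; [apply prefix_app| eauto].
  - exists m. apply flr_hist; auto.
Qed.

Lemma acc_emb nu g h : Acc (fun h2 h1 => hist (game g) h2 /\ exists m, h2 = h1 ++ [m]) h ->
  Acc (fun h2 h1 => hist (Gamma_nu game F nu) h2 /\ exists m, h2 = h1 ++ [m]) (inl g :: map inr h).
Proof.
  intros HA. induction HA as [h _ IH]. constructor. intros y [Hy [a ->]].
  simpl in Hy. change (inl g :: map inr h ++ [a]) with ((inl g :: map inr h) ++ [a]) in *.
  pose proof Hy as Hy'.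
  apply nuHist_snoc_emb in Hy. destruct Hy as [m [-> Hf]].
  replace ((inl g :: map inr h) ++ [inr m]) with (@inl T Mv g :: map inr (h ++ [m])) by (simpl; rewrite map_app; auto).
  apply IH. split; [apply flr_hist; auto| eauto].
Qed.

Lemma inl_inj : FinFun.Injective (@inl T Mv).
Proof. intros x y H; injection H; auto. Qed.
Lemma inr_inj : FinFun.Injective (@inr T Mv).
Proof. intros x y H; injection H; auto. Qed.

Lemma partA_std nu : prob_measure nu -> std_game (Gamma_nu game F nu).
Proof.
  intros [Hnu0 Hnu1].
  split; [simpl; left; auto|].
  split.
  { intros x a H. simpl in *. apply nuHist_snoc in H.
    destruct H as [[-> _]|[g [h [m [-> [-> Hf]]]]]]; [left; auto|].
    apply nuHist_emb. eapply flr_prefix; [apply prefix_app| eauto]. }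
  split.
  { intros x Hx. simpl in Hx. destruct Hx as [->|[g [h [-> Hf]]]].
    - constructor. intros y [Hy [a ->]]. simpl in Hy. pose proof Hy as Hy'.
      apply (nuHist_snoc [] a) in Hy. destruct Hy as [[_ [g ->]]|[g [h [m [E _]]]]]; [|destruct h; discriminate].
      apply (acc_emb nu g []). apply (HG g). apply (HG g).
    - apply acc_emb. apply (HG g). apply flr_hist; auto. }
  split.
  { intros x p Hp. apply nu_pmove_form in Hp. destruct Hp as [g [h [j [-> [Hf [Ep [Hpm ->]]]]]]].
    simpl. exists g, h. auto. }
  split.
  { intros x [Hx [a Ha]] Hc. simpl in Hx, Ha, Hc. apply nuHist_snoc in Ha.
    destruct Ha as [[-> _]|[g [h [m [-> [-> Hf]]]]]].
    -
      split; [intros [g|m]; simpl; auto; lra|]. split.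
      + intros [g|m] Hn; simpl; auto. exfalso; apply Hn. unfold moves; simpl.
        right. exists g, []. split; auto. apply flr_nil.
      + apply (has_sum_push (@inl T Mv) (fun _ => True) nu); auto.
        * apply inl_inj.
        * intros z. unfold moves; simpl. split.
          -- intros Hz. apply (nuHist_snoc [] z) in Hz. destruct Hz as [[_ [g ->]]|[g [h [m [E _]]]]]; [eauto|].
             destruct h; discriminate.
          -- intros [g [-> _]]. right. exists g, []. split; auto. apply flr_nil.
    - rewrite nuP_emb in Hc. destruct (pf (game g) h) as [j|] eqn:Ep; [discriminate|].
      assert (Hfh : flr game F g h) by (eapply flr_prefix; [apply prefix_app| eauto]).
      assert (Hnt : nonterm (game g) h) by (split; [apply flr_hist; auto| exists m; apply flr_hist; auto]).
      destruct (proj1 (proj2 (proj2 (proj2 (proj2 (HG g))))) h Hnt Ep) as [D0 [D1 D2]].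
      assert (Hmv : forall a, moves (Gamma_nu game F nu) (inl g :: map inr h) a <->
                      exists m0, a = inr m0 /\ moves (game g) h m0).
      { intros a. unfold moves; simpl. change (inl g :: map inr h ++ [a]) with ((inl g :: map inr h) ++ [a]).
        rewrite nuHist_snoc_emb. split.
        - intros [m0 [-> H]]. exists m0. split; auto. apply flr_hist; auto.
        - intros [m0 [-> H]]. exists m0. split; auto. apply flr_snoc. split; auto. split; auto.
          intros i Hi. rewrite Ep in Hi; discriminate. }
      split; [intros [g'|m']; simpl; rewrite ?unr_map; auto; lra|]. split.
      + intros [g'|m'] Hn; simpl; auto. rewrite unr_map. apply D1. intros Hm'. apply Hn, Hmv. eauto.
      + apply (has_sum_push (@inr T Mv) (moves (game g) h) (fc (game g) h)); auto.
        * apply inr_inj.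
        * intros y. simpl. rewrite unr_map. auto. }
  split.
  { intros p x y (H1&H2&H3&H4&_). split; split; auto. }
  split.
  { intros p x Hp. pose proof Hp as Hp'. apply nu_pmove_form in Hp'.
    destruct Hp' as [g [h [j [-> _]]]]. destruct Hp as [Hn Hpf].
    split; auto. split; auto. split; auto. split; auto. exists g, h, g, h. auto. }
  split.
  { intros p x y (H1&H2&H3&H4&g1&h1&g2&h2&E1&E2&E3). split; auto. split; auto. split; auto. split; auto.
    exists g2, h2, g1, h1. auto. }
  split.
  { intros p x y z (H1&H2&H3&H4&g1&h1&g2&h2&E1&E2&E3) (K1&K2&K3&K4&g3&h3&g4&h4&E4&E5&E6).
    split; auto. split; auto. split; auto. split; auto. exists g1, h1, g4, h4.
    split; auto. split; auto. rewrite E2 in E4. apply emb_inj in E4. destruct E4; subst. congruence. }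
  { intros p x y (H1&H2&H3&H4&g1&h1&g2&h2&E1&E2&E3) a. subst x y.
    assert (P1 : pmove (Gamma_nu game F nu) (inl g1 :: map inr h1) p) by (split; auto).
    assert (P2 : pmove (Gamma_nu game F nu) (inl g2 :: map inr h2) p) by (split; auto).
    apply nu_pmove_form in P1. apply nu_pmove_form in P2.
    destruct P1 as [g1' [h1' [j1 [E1 [Hf1 [Ep1 [Hp1 Ep]]]]]]].
    destruct P2 as [g2' [h2' [j2 [E2 [Hf2 [Ep2 [Hp2 Ep']]]]]]].
    apply emb_inj in E1; apply emb_inj in E2. destruct E1, E2; subst.
    injection Ep'; intros _ <-.
    rewrite (moves_emb_pm nu g1' h1' j1 a Hf1 Hp1 Ep1).
    rewrite (moves_emb_pm nu g2' h2' j1 a Hf2 Hp2 Ep2). rewrite E3. tauto. }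
Qed.


Lemma ax4 g h i : pmove (game g) h i -> forall h', snd (F g h) h' ->
     (forall X, (exists h1', prefix h1' h' /\ pf (game (fst (F g h))) h1' = Some i /\
                             F (fst (F g h)) h1' = X)
                <-> (exists h1, prefix h1 h /\ pf (game g) h1 = Some i /\ F g h1 = X)) /\
     (forall h1' h1 m, prefix h1' h' -> pf (game (fst (F g h))) h1' = Some i ->
        prefix h1 h -> pf (game g) h1 = Some i -> F (fst (F g h)) h1' = F g h1 ->
        (prefix (h1' ++ [m]) h' <-> prefix (h1 ++ [m]) h)).
Proof. apply (proj2 (proj2 (proj2 Haw))). Qed.

Lemma prefix_emb g g' (h h' : list Mv) :
  prefix (inl g :: map inr h : list (T + Mv)) (inl g' :: map inr h') -> g = g' /\ prefix h h'.
Proof.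
  intros [e E]. simpl in E. injection E; intros E1 E2. split; auto.
  apply map_eq_app in E1. destruct E1 as [l1 [l2 [-> [E1 E2']]]].
  apply (map_inr_inj (T:=T)) in E1. subst. exists l2; auto.
Qed.

Lemma prefix_emb2 g (h h' : list Mv) : prefix h h' ->
  prefix (inl g :: map inr h : list (T + Mv)) (inl g :: map inr h').
Proof. intros [e ->]. exists (map inr e). simpl. rewrite map_app. auto. Qed.

Lemma partA_pr nu : prob_measure nu -> perfect_recall (Gamma_nu game F nu).
Proof.
  intros Hnu. pose proof (partA_std nu Hnu) as HS.
  intros p x y (H1&H2&H3&H4&g1&h1&g2&h2&E1&E2&E3) x1 a Hpre Hpf. subst x y.
  assert (P1 : pmove (Gamma_nu game F nu) (inl g1 :: map inr h1) p) by (split; auto).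
  assert (P2 : pmove (Gamma_nu game F nu) (inl g2 :: map inr h2) p) by (split; auto).
  apply nu_pmove_form in P1. apply nu_pmove_form in P2.
  destruct P1 as [g1' [h1' [j1 [E1 [Hf1 [Ep1 [Hp1 Ep]]]]]]].
  destruct P2 as [g2' [h2' [j2 [E2 [Hf2 [Ep2 [Hp2 Ep']]]]]]].
  apply emb_inj in E1; apply emb_inj in E2. destruct E1, E2; subst g1' h1' g2' h2'.
  rewrite Ep in Ep'. injection Ep'; intros _ <-. clear Ep'.
  assert (Hx1 : hist (Gamma_nu game F nu) (x1 ++ [a])).
  { eapply std_hist_prefix'; eauto. simpl. apply nuHist_emb; auto. }
  simpl in Hx1. apply nuHist_snoc in Hx1.
  destruct Hx1 as [[-> _]|[g [h1p [m [-> [-> Hfm]]]]]]; [discriminate|].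
  replace ((inl g :: map inr h1p) ++ [inr m]) with (@inl T Mv g :: map inr (h1p ++ [m])) in Hpre
    by (simpl; rewrite map_app; auto).
  apply prefix_emb in Hpre. destruct Hpre as [-> Hpre].
  simpl in Hpf. rewrite unr_map in Hpf. destruct (pf (game g1) h1p) as [j'|] eqn:Ejp; [|discriminate].
  rewrite Ep in Hpf. injection Hpf; intros Eg' Ej. subst j'. clear Hpf.
  destruct (F_nonempty g1 h1 j1 Hp1) as [h0 [m0 [H0 _]]].
  destruct (ax4 g1 h1 j1 Hp1 h0 H0) as [A1 B1].
  assert (Hpre' : prefix h1p h1) by (eapply prefix_trans; [apply prefix_app| eauto]).
  destruct (proj2 (A1 (F g1 h1p))) as [hq' [Hq'1 [Hq'2 Hq'3]]]; [eauto|].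
  assert (Hm1 : prefix (hq' ++ [m]) h0) by (apply (B1 hq' h1p m); auto).
  rewrite E3 in H0. destruct (ax4 g2 h2 j1 Hp2 h0 H0) as [A2 B2].
  rewrite <- E3 in A2, B2.
  destruct (proj1 (A2 (F g1 h1p))) as [hq [Hq1 [Hq2 Hq3]]]; [eauto|].
  assert (Hm2 : prefix (hq ++ [m]) h2) by (apply (B2 hq' hq m); auto; congruence).
  subst p. exists (inl g2 :: map inr hq). split; [|split].
  - replace ((inl g2 :: map inr hq) ++ [inr m]) with (@inl T Mv g2 :: map inr (hq ++ [m]))
      by (simpl; rewrite map_app; auto). apply prefix_emb2; auto.
  - simpl. rewrite unr_map, Hq2, Hq3, Eg'. auto.
  - assert (Hfq : flr game F g2 (hq ++ [m])) by (eapply flr_prefix; eauto).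
    pose proof (emb_pmove nu g1 h1p j1 m Hfm Ejp) as [K1 K2].
    pose proof (emb_pmove nu g2 hq j1 m Hfq Hq2) as [K3 K4].
    split; [exact K1|]. split; [exact K3|]. split; [rewrite <- Eg'; exact K2|].
    split; [rewrite <- Eg', <- Hq3; exact K4|].
    exists g1, h1p, g2, hq. auto.
Qed.


Lemma term_list g : exists LT, NoDup LT /\ (forall z, In z LT <-> terminal (game g) z).
Proof.
  destruct (proj2 (proj2 (proj1 Haw g))) as [L HL].
  exists (nodup cdec (filter (fun z => if excluded_middle_informative (terminal (game g) z) then true else false) L)).
  split; [apply NoDup_nodup|]. intros z. rewrite nodup_In, filter_In.
  destruct (excluded_middle_informative (terminal (game g) z)) as [Ht|Ht]; split; intros H; auto.
  - split; auto. apply HL. apply Ht.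
  - destruct H; discriminate.
  - contradiction.
Qed.

Lemma exp_exists g stepg i : exists w, exp_payoff (game g) stepg i w.
Proof.
  destruct (term_list g) as [LT [HN HT]].
  exists (sumL (fun z => path_prob stepg z * util (game g) i z) LT). unfold exp_payoff.
  apply (has_sum_finite _ _ LT); auto.
  - apply Forall_forall. intros; apply HT; auto.
  - intros z Hz Hn. exfalso. apply Hn, HT; auto.
Qed.

Lemma pp_zero g (stepg : list Mv -> Mv -> R) :
  (forall h m, flr game F g h -> hist (game g) (h++[m]) -> ~ flr game F g (h++[m]) -> stepg h m = 0) ->
  forall r h, flr game F g h -> hist (game g) (h ++ r) -> ~ flr game F g (h ++ r) -> pp_aux stepg h r = 0.
Proof.
  intros Hc. induction r as [|m r IH]; intros h Hf Hh Hn.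
  - rewrite app_nil_r in Hn; contradiction.
  - simpl. replace (h ++ m :: r) with ((h ++ [m]) ++ r) in * by (rewrite <- app_assoc; auto).
    destruct (classic (flr game F g (h ++ [m]))) as [Hm|Hm].
    + rewrite IH; auto; lra.
    + rewrite Hc; auto; [lra|]. eapply std_hist_prefix; [apply HG| eauto].
Qed.

Lemma pp_emb g (stepG : list (T + Mv) -> T + Mv -> R) (stepg : list Mv -> Mv -> R) :
  (forall h m, flr game F g (h++[m]) -> stepG (inl g :: map inr h) (inr m) = stepg h m) ->
  forall r h, flr game F g (h ++ r) -> pp_aux stepG (inl g :: map inr h) (map inr r) = pp_aux stepg h r.
Proof.
  intros Hc. induction r as [|m r IH]; intros h Hf; simpl; auto.
  replace (h ++ m :: r) with ((h ++ [m]) ++ r) in * by (rewrite <- app_assoc; auto).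
  replace (inl g :: map inr h ++ [inr m]) with (@inl T Mv g :: map inr (h ++ [m])) by (rewrite map_app; auto).
  rewrite IH; auto. rewrite Hc; auto. eapply flr_prefix; [apply prefix_app| eauto].
Qed.

Lemma transfer nu g i stepG stepg w :
  stepG [] (inl g) = nu g ->
  (forall h m, flr game F g (h++[m]) -> stepG (inl g :: map inr h) (inr m) = stepg h m) ->
  (forall h m, flr game F g h -> hist (game g) (h++[m]) -> ~ flr game F g (h++[m]) -> stepg h m = 0) ->
  exp_payoff (game g) stepg i w -> exp_payoff (Gamma_nu game F nu) stepG (i, g) (nu g * w).
Proof.
  intros C1 C2 C3 Hw.
  destruct (term_list g) as [LT [HN HT]].
  set (fg := fun z => path_prob stepg z * util (game g) i z).
  assert (Ew : w = sumL fg LT).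
  { eapply has_sum_unique; [exact Hw|]. apply has_sum_finite; auto.
    - apply Forall_forall. intros; apply HT; auto.
    - intros z Hz Hn. exfalso. apply Hn, HT; auto. }
  set (pflr := fun z => if excluded_middle_informative (flr game F g z) then true else false).
  set (LF := filter pflr LT).
  set (emb := fun z : list Mv => (inl g :: map inr z : list (T + Mv))).
  set (LG := map emb LF).
  set (fG := fun x => path_prob stepG x * nuU game (i, g) x).
  assert (HLF : forall z, In z LF <-> terminal (game g) z /\ flr game F g z).
  { intros z. unfold LF. rewrite filter_In, HT. unfold pflr.
    destruct (excluded_middle_informative (flr game F g z)); split; intros [A B]; auto; discriminate. }
  assert (Hterm : forall z, terminal (game g) z -> flr game F g z -> terminal (Gamma_nu game F nu) (emb z)).
  { intros z Hz Hf. split; [simpl; apply nuHist_emb; auto|].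
    intros [a Ha]. unfold moves in Ha. simpl in Ha. change (inl g :: map inr z ++ [a]) with ((inl g :: map inr z) ++ [a]) in Ha.
    apply nuHist_snoc_emb in Ha. destruct Ha as [m [_ Hm]]. apply Hz. exists m. apply flr_hist; auto. }
  assert (HfG : forall z, flr game F g z -> fG (emb z) = nu g * fg z).
  { intros z Hf. unfold fG, fg, emb, path_prob. simpl. rewrite C1.
    change [inl g] with (@inl T Mv g :: map inr []). rewrite (pp_emb g stepG stepg C2 z []); auto.
    destruct (excluded_middle_informative (g = g)) as [_|]; [|congruence]. rewrite unr_map. ring. }
  assert (E1 : sumL fG LG = nu g * w).
  { unfold LG. rewrite sumL_map. rewrite (sumL_ext _ (fun z => nu g * fg z)).
    2:{ intros z Hz. apply HfG. apply HLF; auto. }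
    rewrite sumL_scal, Ew. f_equal. rewrite (sumL_filter fg pflr LT). fold LF.
    rewrite (sumL_zero fg (filter _ LT)); [ring|].
    intros z Hz. rewrite filter_In in Hz. destruct Hz as [Hz Hn]. unfold pflr in Hn.
    destruct (excluded_middle_informative (flr game F g z)) as [|Hnf]; [discriminate|].
    apply HT in Hz. unfold fg, path_prob. rewrite (pp_zero g stepg C3 z []); [ring|apply flr_nil| apply Hz| auto]. }
  unfold exp_payoff. rewrite <- E1. apply has_sum_finite.
  - unfold LG. apply FinFun.Injective_map_NoDup.
    + intros a b E. apply emb_inj in E. destruct E; auto.
    + apply NoDup_filter; auto.
  - apply Forall_forall. intros x Hx. unfold LG in Hx. apply in_map_iff in Hx.
    destruct Hx as [z [<- Hz]]. apply HLF in Hz. apply Hterm; apply Hz.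
  - intros x Hx Hn. destruct (Req_dec (fG x) 0) as [|Hne]; auto. exfalso. apply Hn.
    destruct Hx as [Hx Hnm]. simpl in Hx. destruct Hx as [->|[g' [h [-> Hf]]]].
    + exfalso. apply Hnm. exists (inl g). unfold moves; simpl. right. exists g, []. split; auto. apply flr_nil.
    + unfold fG in Hne. simpl in Hne. destruct (excluded_middle_informative (g' = g)) as [->|]; [|exfalso; apply Hne; ring].
      unfold LG. change (inl g :: map inr h) with (emb h). apply in_map. apply HLF. split; auto. split; [apply flr_hist; auto|].
      intros Hnt. destruct (flr_ext g h Hf (conj (flr_hist _ _ Hf) Hnt)) as [m Hm].
      apply Hnm. exists (inr m). unfold moves; simpl. change (inl g :: map inr h ++ [inr m]) with ((inl g :: map inr h) ++ [@inr T Mv m]).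
      apply nuHist_snoc_emb. eauto.
Qed.


Lemma C3_local (sg : N -> T -> T -> list Mv -> Mv -> R) g :
  (forall j g'', Gset game F j g'' -> local_strategy game F j g'' (sg j g'')) ->
  forall h m, flr game F g h -> hist (game g) (h++[m]) -> ~ flr game F g (h++[m]) ->
  aug_step game F sg g h m = 0.
Proof.
  intros Hl h m Hf Hm Hn. destruct (flr_not_ext g h m Hf Hm Hn) as [j [Ep [Hp Hne]]].
  unfold aug_step. rewrite Ep.
  assert (HGs : Gset game F j (fst (F g h))) by (exists g, h; auto).
  destruct (Hl j _ HGs g h Hp eq_refl) as [[D0 [D1 D2]] _]. apply D1. exact Hne.
Qed.

Lemma C2_corr nu (sG : N * T -> list (T + Mv) -> T + Mv -> R) (sg : N -> T -> T -> list Mv -> Mv -> R) g :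
  (forall j g'' g0 h, pmove (Gamma_nu game F nu) (inl g0 :: map inr h) (j, g'') ->
     forall m, sG (j, g'') (inl g0 :: map inr h) (inr m) = sg j g'' g0 h m) ->
  forall h m, flr game F g (h ++ [m]) ->
  profile_step (Gamma_nu game F nu) sG (inl g :: map inr h) (inr m) = aug_step game F sg g h m.
Proof.
  intros Hc h m Hf. unfold profile_step, aug_step.
  change (pf (Gamma_nu game F nu) (inl g :: map inr h)) with (nuP game F (inl g :: map inr h)).
  rewrite nuP_emb. destruct (pf (game g) h) as [j|] eqn:Ep.
  - apply Hc. eapply emb_pmove; eauto.
  - simpl. rewrite unr_map. reflexivity.
Qed.

Lemma behav_from_local nu i g' (b : list (T + Mv) -> T + Mv -> R) (b' : T -> list Mv -> Mv -> R) :
  local_strategy game F i g' b' ->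
  (forall g h, pmove (Gamma_nu game F nu) (inl g :: map inr h) (i, g') ->
     forall a, b (inl g :: map inr h) a = match a with inr m => b' g h m | inl _ => 0 end) ->
  behavioral (Gamma_nu game F nu) (i, g') b.
Proof.
  intros Hl Hb x Hx. pose proof Hx as Hx'.
  apply nu_pmove_form in Hx'. destruct Hx' as [g [h [j [-> [Hf [Ep [Hpm Epp]]]]]]].
  injection Epp; intros Eg Ej. subst j.
  destruct (Hl g h Hpm (eq_sym Eg)) as [[D0 [D1 D2]] Dc].
  pose proof (fun a => moves_emb_pm nu g h i a Hf Hpm Ep) as Hmv.
  split; [split; [|split]|].
  - intros [g0|m]; rewrite Hb; auto; lra.
  - intros [g0|m] Hn; rewrite Hb; auto. apply D1. intros Hm. apply Hn, Hmv. exists m. split; auto. rewrite <- Eg. exact Hm.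
  - apply (has_sum_push (@inr T Mv) (fun m => exists h2, snd (F g h) h2 /\ hist (game g') (h2 ++ [m])) (b' g h)); [apply inr_inj| | |exact D2].
    + intros a. rewrite Hmv. rewrite Eg. split; intros [m [-> Hm]]; eauto.
    + intros m. rewrite Hb; auto.
  - intros y (K1&K2&K3&K4&g1&h1&g2&h2&E1&E2&E3) a. subst y.
    apply emb_inj in E1. destruct E1; subst g1 h1.
    assert (P2 : pmove (Gamma_nu game F nu) (inl g2 :: map inr h2) (i, g')) by (split; auto).
    pose proof P2 as P2'. apply nu_pmove_form in P2'.
    destruct P2' as [g3 [h3 [j3 [E4 [Hf3 [Ep3 [Hpm3 Epp3]]]]]]]. apply emb_inj in E4; destruct E4; subst g3 h3.
    injection Epp3; intros _ Ej. subst j3.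
    rewrite (Hb g h Hx), (Hb g2 h2 P2). destruct a; auto.
Qed.

Definition Rep nu i g' (X : T * (list Mv -> Prop)) : Prop :=
  exists gh : T * list Mv, pmove (Gamma_nu game F nu) (inl (fst gh) :: map inr (snd gh)) (i, g') /\
    F (fst gh) (snd gh) = X.

Definition repOf nu i g' X : option (T * list Mv) :=
  match excluded_middle_informative (Rep nu i g' X) with
  | left H => Some (proj1_sig (constructive_indefinite_description _ H))
  | right _ => None
  end.

Lemma repOf_some nu i g' X gh : repOf nu i g' X = Some gh ->
  pmove (Gamma_nu game F nu) (inl (fst gh) :: map inr (snd gh)) (i, g') /\ F (fst gh) (snd gh) = X.
Proof.
  unfold repOf. destruct (excluded_middle_informative (Rep nu i g' X)) as [H|H]; [|discriminate].
  intros E. injection E; intros <-. apply (proj2_sig (constructive_indefinite_description _ H)).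
Qed.

Lemma repOf_none nu i g' X : repOf nu i g' X = None -> ~ Rep nu i g' X.
Proof.
  unfold repOf. destruct (excluded_middle_informative (Rep nu i g' X)) as [H|H]; [discriminate|auto].
Qed.

Definition tloc nu i g' (t : N * T -> list (T + Mv) -> T + Mv -> R)
  (s' : N -> T -> T -> list Mv -> Mv -> R) : T -> list Mv -> Mv -> R :=
  fun g h m => match repOf nu i g' (F g h) with
               | Some gh => t (i, g') (inl (fst gh) :: map inr (snd gh)) (inr m)
               | None => s' i g' g h m end.

Lemma local_from_behav nu i g' t s' :
  local_strategy game F i g' (s' i g') -> behavioral (Gamma_nu game F nu) (i, g') (t (i, g')) ->
  local_strategy game F i g' (tloc nu i g' t s').
Proof.
  intros Hs Hb g h Hp Eg. split.
  - unfold tloc. destruct (repOf nu i g' (F g h)) as [[g0 h0]|] eqn:E.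
    + destruct (repOf_some _ _ _ _ _ E) as [Hpm HF]. simpl in Hpm, HF.
      destruct (Hb _ Hpm) as [[D0 [D1 D2]] _].
      pose proof Hpm as Hpm'. apply nu_pmove_form in Hpm'.
      destruct Hpm' as [g1 [h1 [j [E1 [Hf1 [Ep1 [Hp1 Epp]]]]]]]. apply emb_inj in E1; destruct E1; subst g1 h1.
      pose proof (fun a => moves_emb_pm nu g0 h0 j a Hf1 Hp1 Ep1) as Hmv.
      rewrite HF in Hmv. rewrite Eg in Hmv.
      split; [|split].
      * intros m; apply D0.
      * intros m Hm. apply D1. intros Hm'. apply Hmv in Hm'. destruct Hm' as [m' [E' Hm'']].
        injection E'; intros <-. auto.
      * apply (has_sum_ext (fun m => moves (Gamma_nu game F nu) (inl g0 :: map inr h0) (inr m)) _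
          (fun m => t (i, g') (inl g0 :: map inr h0) (inr m)) _ 1).
        -- intros m. rewrite Hmv. split; [intros [m' [E' H]]; injection E'; intros <-; auto| eauto].
        -- intros; reflexivity.
        -- apply (has_sum_pull (@inr T Mv) (moves (Gamma_nu game F nu) (inl g0 :: map inr h0))
              (t (i, g') (inl g0 :: map inr h0)) 1 inr_inj); [|exact D2].
           intros a Ha. apply Hmv in Ha. destruct Ha as [m [-> _]]; eauto.
    + apply (Hs g h Hp Eg).
  - intros g2 h2 Hp2 HF2 m. unfold tloc. rewrite HF2.
    destruct (repOf nu i g' (F g h)) as [[g0 h0]|] eqn:E; auto.
    apply (Hs g h Hp Eg); auto.
Qed.


Definition tNu i g' (t : N -> T -> T -> list Mv -> Mv -> R) (s : N * T -> list (T + Mv) -> T + Mv -> R)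
  : N * T -> list (T + Mv) -> T + Mv -> R :=
  fun p x a => if cdec p (i, g') then
     match x with
     | inl g :: r => match a with inr m => t i g' g (unr r) m | inl _ => 0 end
     | _ => 0 end
   else s p x a.

Lemma partB nu : prob_measure nu -> (forall g, 0 < nu g) ->
  forall (s' : N -> T -> T -> list Mv -> Mv -> R) (s : N * T -> list (T + Mv) -> T + Mv -> R),
  gen_profile game F s' -> induced game F nu s s' ->
  (nash (Gamma_nu game F nu) s <-> gen_nash game F s').
Proof.
  intros Hnu Hpos s' s Hgp Hind. split.
  - intros [Hbeh Hnash] i g' HGs t Hag Hloc.
    set (tN := tNu i g' t s).
    assert (Hloc_all : forall j g'', Gset game F j g'' -> local_strategy game F j g'' (t j g'')).
    { intros j g'' Hj. destruct (cdec (j, g'') (i, g')) as [E|E].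
      - injection E; intros; subst; auto.
      - rewrite Hag; auto. }
    assert (HtN : behavioral (Gamma_nu game F nu) (i, g') (tN (i, g'))).
    { apply behav_from_local with (t i g'); auto. intros g h Hpm a. unfold tN, tNu.
      destruct (cdec (i, g') (i, g')) as [_|]; [|congruence]. destruct a; rewrite ?unr_map; auto. }
    assert (Hagree : forall q, q <> (i, g') -> tN q = s q).
    { intros q Hq. unfold tN, tNu. destruct (cdec q (i, g')); [contradiction|reflexivity]. }
    destruct (Hnash (i, g') HGs tN Hagree HtN) as [V [V' [HV [HV' Hle]]]].
    destruct (exp_exists g' (aug_step game F s' g') i) as [w Hw].
    destruct (exp_exists g' (aug_step game F t g') i) as [w' Hw'].
    exists w, w'. split; auto. split; auto.
    assert (E1 : V = nu g' * w).
    { eapply has_sum_unique; [exact HV|]. apply (transfer nu g' i _ (aug_step game F s' g') w); auto.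
      - apply C2_corr. intros j g'' g0 h Hp m. apply (Hind j g'' g0 h Hp (inr m)).
      - apply C3_local. intros j g'' Hj. apply Hgp; auto. }
    assert (E2 : V' = nu g' * w').
    { eapply has_sum_unique; [exact HV'|]. apply (transfer nu g' i _ (aug_step game F t g') w'); auto.
      - apply C2_corr. intros j g'' g0 h Hp m. unfold tN, tNu.
        destruct (cdec (j, g'') (i, g')) as [E|E].
        + injection E; intros; subst. rewrite unr_map. reflexivity.
        + rewrite (Hind j g'' g0 h Hp (inr m)). rewrite Hag; auto.
      - apply C3_local. auto. }
    subst V V'. apply Rmult_le_reg_l with (nu g'); auto.
  - intros Hgn. split.
    + intros [i g'] HGs. apply behav_from_local with (s' i g'); [apply Hgp; auto|].
      intros g h Hpm a. apply Hind; auto.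
    + intros [i g'] HGs t Hag Hbeh. simpl in HGs.
      set (tl := tloc nu i g' t s').
      set (t' := fun j g'' => if cdec (j, g'') (i, g') then tl else s' j g'').
      assert (Hloc' : local_strategy game F i g' (t' i g')).
      { unfold t'. destruct (cdec (i, g') (i, g')); [|congruence]. apply local_from_behav; auto. }
      assert (Hag' : forall j g'', (j, g'') <> (i, g') -> t' j g'' = s' j g'').
      { intros j g'' E. unfold t'. destruct (cdec (j, g'') (i, g')); [contradiction|reflexivity]. }
      destruct (Hgn i g' HGs t' Hag' Hloc') as [v [v' [Hv [Hv' Hle]]]].
      exists (nu g' * v), (nu g' * v'). split; [|split].
      * apply (transfer nu g' i _ (aug_step game F s' g') v); auto.
        -- apply C2_corr. intros j g'' g0 h Hp m. apply (Hind j g'' g0 h Hp (inr m)).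
        -- apply C3_local. intros j g'' Hj. apply Hgp; auto.
      * apply (transfer nu g' i _ (aug_step game F t' g') v'); auto.
        -- apply C2_corr. intros j g'' g0 h Hp m.
           destruct (cdec (j, g'') (i, g')) as [E|E].
           ++ injection E; intros; subst j g''. unfold t'. destruct (cdec (i, g') (i, g')) as [_|]; [|congruence].
              unfold tl, tloc. destruct (repOf nu i g' (F g0 h)) as [[g1 h1]|] eqn:ER.
              ** destruct (repOf_some _ _ _ _ _ ER) as [Hpm HF]. simpl in Hpm, HF.
                 apply (proj2 (Hbeh _ Hp)). destruct Hp as [Hn1 Hp1]. destruct Hpm as [Hn2 Hp2].
                 split; auto. split; auto. split; auto. split; auto. exists g0, h, g1, h1. auto.
              ** exfalso. apply (repOf_none _ _ _ _ ER). exists (g0, h). simpl. auto.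
           ++ rewrite Hag by auto. rewrite (Hind j g'' g0 h Hp (inr m)). rewrite Hag'; auto.
        -- apply C3_local. intros j g'' Hj. destruct (cdec (j, g'') (i, g')) as [E|E].
           ++ injection E; intros; subst; auto.
           ++ rewrite Hag'; auto.
      * apply Rmult_le_compat_l; auto. destruct Hnu as [H0 _]; auto.
Qed.

End Aw.


Theorem theorem3p1
  (N Mv T : Type) (game : T -> egame N Mv) (gm : T)
  (F : T -> list Mv -> T * (list Mv -> Prop)) :
  (exists e : nat -> T, forall g, exists n, e n = g) ->
  awareness_game game F ->
  forall nu : T -> R, prob_measure nu ->
    (std_game (Gamma_nu game F nu) /\ perfect_recall (Gamma_nu game F nu)) /\
    ((forall g, 0 < nu g) ->
     forall (s' : N -> T -> T -> list Mv -> Mv -> R)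
            (s : N * T -> list (T + Mv) -> (T + Mv) -> R),
       gen_profile game F s' ->
       induced game F nu s s' ->
       (nash (Gamma_nu game F nu) s <-> gen_nash game F s')).
Proof.
  intros _ Haw nu Hnu. split.
  - split; [apply partA_std | apply partA_pr]; auto.
  - intros Hpos s' s Hgp Hind. apply partB; auto.
Qed.
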